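(* Let $\ell\colon X\times U\rightarrow\mathbb{R}$ and $g\colon X\times U\rightarrow \mathbb{R}^m$ be convex functions and let $f_d\colon X\times U\rightarrow X$ be an affine function. If $(U,G)\colon X\rightarrow X$ is the one-step bifunction in $\mathbf{Para}(\textnormal{\textbf{Conv}})$ generated by these functions, namely $G((u, x), x') = \ell(x,u) + \delta(x' \mid f_d(x,u)) + \delta(x,u \mid g(x,u) \leq 0)$, then the $N$-fold composite $(U,G)^N$ in $\mathbf{Para}(\textnormal{\textbf{Conv}})$ is the parameterized convex bifunction representation of the MPC optimization problem associated with $f_d, \ell$, and $g$ over a prediction horizon of $N$, i.e. $(U,G)^N((u_{N-1},\dots,u_0,x_0),x_N) = \inf_{x_1,\dots,x_{N-1}}\big[\sum_{i=0}^{N-1}\ell(x_i,u_i)+\delta(x_{i+1} \mid f_d(x_i,u_i)) + \delta(x_i,u_i \mid g(x_i,u_i)\leq 0)\big]$.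
   Context: $X,U$ are Euclidean spaces. A convex bifunction from $A$ to $B$ is a jointly convex function $A\times B\to\mathbb{R}\cup\{\pm\infty\}$; $\textnormal{\textbf{Conv}}$ is the symmetric monoidal category of Euclidean spaces and convex bifunctions, with composition $(G\circ F)(u,y)=\inf_x\{F(u,x)+G(x,y)\}$ and monoidal product given by direct sum on spaces and pointwise sum on bifunctions. $\mathbf{Para}(\textnormal{\textbf{Conv}})$ has morphisms $X\to Y$ given by pairs $(U,F)$ with $F$ a convex bifunction from $U\oplus X$ to $Y$; the composite of $(U_1,f)\colon X\to Y$ and $(U_2,g)\colon Y\to Z$ is $(U_2\oplus U_1, g\circ(\mathrm{id}_{U_2}\oplus f))$. $\delta(x'\mid y)$ is $0$ if $x'=y$ and $+\infty$ otherwise; $\delta(x,u\mid g(x,u)\le0)$ is the indicator of $\{(x,u):g(x,u)\le 0\}$. The MPC problem minimizes $\sum\ell(x_i,u_i)$ subject to $x_{i+1}=f_d(x_i,u_i)$ and $g(x_i,u_i)\le 0$ over the horizon. *)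

(* Defs.v *)
From HB Require Import structures.
From mathcomp Require Import all_boot all_order all_algebra.
From mathcomp Require Import all_classical all_reals all_analysis.
Set Implicit Arguments. Unset Strict Implicit. Unset Printing Implicit Defensive.
Import Order.TTheory GRing.Theory Num.Theory.
Local Open Scope ring_scope.
Local Open Scope classical_set_scope.

Section ConvBifun.
Variable R : realType.
Local Open Scope ereal_scope.

Definition cdelta (A : Type) (a b : A) : \bar R :=
  if `[< a = b >] then 0 else +oo.

Definition cindicator (A : Type) (S : set A) (a : A) : \bar R :=
  if `[< S a >] then 0 else +oo.

Definition conv_comp (A B C : Type) (F : A -> B -> \bar R) (G : B -> C -> \bar R)
  : A -> C -> \bar R :=
  fun a c => ereal_inf [set F a b + G b c | b in [set: B]].

Definition conv_oplus (A1 A2 B1 B2 : Type) (F : A1 -> B1 -> \bar R)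
  (H : A2 -> B2 -> \bar R) : (A1 * A2) -> (B1 * B2) -> \bar R :=
  fun a b => F a.1 b.1 + H a.2 b.2.

(* Para(Conv): a morphism X -> Y with parameter space P is a bifunction
   from P (+) X to Y, represented as P * X -> Y -> \bar R. *)
Definition para_id (X : Type) : (unit * X) -> X -> \bar R :=
  fun px y => @cdelta X px.2 y.

(* composite of (P1,f) : X -> Y and (P2,g) : Y -> Z is
   (P2 (+) P1, g o (id_{P2} (+) f)) ; the direct sum (P2 (+) P1) (+) X
   is identified with P2 (+) (P1 (+) X) by reassociation. *)
Definition para_comp (P1 P2 X Y Z : Type)
  (f : (P1 * X) -> Y -> \bar R) (g : (P2 * Y) -> Z -> \bar R)
  : ((P2 * P1) * X) -> Z -> \bar R :=
  fun ppx z =>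
    conv_comp (conv_oplus (@cdelta P2) f) g (ppx.1.1, (ppx.1.2, ppx.2)) z.

Fixpoint paramN (U : Type) (N : nat) : Type :=
  if N is N'.+1 then (U * paramN U N')%type else unit.

Fixpoint para_pow (U X : Type) (G : (U * X) -> X -> \bar R) (N : nat)
  : (paramN U N * X) -> X -> \bar R :=
  match N return (paramN U N * X) -> X -> \bar R with
  | 0 => @para_id X
  | N'.+1 => para_comp (@para_pow U X G N') G
  end.

(* the i-th control u_i of a parameter (u_{N-1}, ..., u_0) *)
Fixpoint ctrl (U : Type) (u0 : U) (N : nat) : paramN U N -> nat -> U :=
  match N return paramN U N -> nat -> U with
  | 0 => fun _ _ => u0
  | N'.+1 => fun p i => if i == N' then p.1 else ctrl u0 p.2 i
  end.

End ConvBifun.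

Section MPC.
Variables (R : realType) (n k m : nat).
Local Notation X := 'rV[R]_n.
Local Notation U := 'rV[R]_k.

Definition convex_XU (h : X -> U -> R) : Prop :=
  forall (x1 x2 : X) (u1 u2 : U) (t : R), 0 <= t <= 1 ->
    h (t *: x1 + (1 - t) *: x2) (t *: u1 + (1 - t) *: u2)
      <= t * h x1 u1 + (1 - t) * h x2 u2.

Definition affine_XU (f : X -> U -> X) : Prop :=
  forall (x1 x2 : X) (u1 u2 : U) (t : R),
    f (t *: x1 + (1 - t) *: x2) (t *: u1 + (1 - t) *: u2)
      = t *: f x1 u1 + (1 - t) *: f x2 u2.

Definition stage (ell : X -> U -> R) (fd : X -> U -> X) (g : X -> U -> 'rV[R]_m)
  (x : X) (u : U) (x' : X) : \bar R :=
  ((ell x u)%:E + @cdelta R X x' (fd x u)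
   + @cindicator R (X * U) [set xu : X * U | forall j, (g xu.1 xu.2 ord0 j <= 0)%R] (x, u))%E.

Definition one_step (ell : X -> U -> R) (fd : X -> U -> X) (g : X -> U -> 'rV[R]_m)
  : (U * X) -> X -> \bar R :=
  fun ux x' => stage ell fd g ux.2 ux.1 x'.

End MPC.

(* Main.v *)
Require Import Defs.
From HB Require Import structures.
From mathcomp Require Import all_boot all_order all_algebra.
From mathcomp Require Import all_classical all_reals all_analysis.
Import Order.TTheory GRing.Theory Num.Theory.
Local Open Scope ring_scope.
Local Open Scope classical_set_scope.

Section Aux.
Variables (R : realType) (n k m : nat).
Variables (ell : 'rV[R]_n -> 'rV[R]_k -> R) (g : 'rV[R]_n -> 'rV[R]_k -> 'rV[R]_m)
  (fd : 'rV[R]_n -> 'rV[R]_k -> 'rV[R]_n).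
Local Notation X := 'rV[R]_n.
Local Notation U := 'rV[R]_k.
Local Open Scope ereal_scope.

Fixpoint endp (N : nat) : paramN U N -> X -> X :=
  match N return paramN U N -> X -> X with
  | 0 => fun _ x => x
  | N'.+1 => fun p x => fd (endp N' p.2 x) p.1
  end.

Fixpoint Fc (N : nat) : paramN U N -> X -> X -> \bar R :=
  match N return paramN U N -> X -> X -> \bar R with
  | 0 => fun _ x y => @cdelta R X x y
  | N'.+1 => fun p x z => Fc N' p.2 x (endp N' p.2 x)
                          + stage ell fd g (endp N' p.2 x) p.1 z
  end.

Lemma cdelta_ge0 (A : Type) (a b : A) : 0 <= @cdelta R A a b.
Proof. by rewrite /cdelta; case: asboolP. Qed.

Lemma stage_ninfty x u x' : stage ell fd g x u x' != -oo.
Proof.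
by rewrite /stage /cdelta /cindicator; case: asboolP => _; case: asboolP => _;
  rewrite ?adde0 ?addey ?addye.
Qed.

Lemma stage_pinfty x u x' : x' <> fd x u -> stage ell fd g x u x' = +oo.
Proof.
move=> ne; rewrite /stage /cdelta; case: asboolP => // _.
rewrite addey // addye //.
by rewrite /cindicator; case: asboolP.
Qed.

Lemma Fc_ninfty N p x y : Fc N p x y != -oo.
Proof.
elim: N p x y => [|N IH] p x y /=.
  by rewrite /cdelta; case: asboolP.
by rewrite adde_eq_ninfty negb_or IH stage_ninfty.
Qed.

Lemma Fc_pinfty N p x y : y <> endp N p x -> Fc N p x y = +oo.
Proof.
case: N p => [|N] p /= ne.
  by rewrite /cdelta; case: asboolP => // e; exfalso; apply: ne.
by rewrite stage_pinfty // addey // Fc_ninfty.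
Qed.
Lemma cdelta_refl (A : Type) (a : A) : @cdelta R A a a = 0.
Proof. by rewrite /cdelta; case: asboolP. Qed.

Lemma cdelta_ne (A : Type) (a b : A) : a <> b -> @cdelta R A a b = +oo.
Proof. by rewrite /cdelta; case: asboolP. Qed.

Lemma lhs_Fc N p x y :
  @para_pow R _ _ (one_step ell fd g) N (p, x) y = Fc N p x y.
Proof.
elim: N p x y => [|N IH] p x y //=.
case: p => u p /=.
rewrite /para_comp /conv_comp /conv_oplus /=.
apply/le_anti/andP; split.
  apply: ge_ereal_inf; exists (Fc N p x (endp N p x) + stage ell fd g (endp N p x) u y) => //.
  exists (u, endp N p x) => //=.
  by rewrite IH cdelta_refl add0e.
apply: le_ereal_inf_tmp => _ [[u' y'] _ <-] /=.
rewrite IH /one_step /=.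
have [<-|neu] := eqVneq u' u; last first.
  rewrite cdelta_ne; last by move=> e; rewrite e eqxx in neu.
  by rewrite addye ?Fc_ninfty // addye ?stage_ninfty // leey.
have [->|ney] := eqVneq y' (endp N p x); first by rewrite cdelta_refl add0e.
rewrite (@Fc_pinfty N p x y'); last by move=> e; rewrite e eqxx in ney.
by rewrite addey ?cdelta_refl // addye ?stage_ninfty // leey.
Qed.
Definition S N (p : paramN U N) (xs : nat -> X) : \bar R :=
  \sum_(i < N) stage ell fd g (xs i) (@ctrl _ 0%R N p i) (xs i.+1).

Lemma S_split N u p xs :
  S N.+1 ((u, p) : paramN U N.+1) xs = S N p xs + stage ell fd g (xs N) u (xs N.+1).
Proof.
rewrite /S big_ord_recr /= eqxx; congr (_ + _).
by apply: eq_bigr => i _; rewrite /= ltn_eqF.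
Qed.

Lemma S_ninfty N p xs : S N p xs != -oo.
Proof.
rewrite /S; apply: (big_ind (fun x : \bar R => x != -oo)) => //.
by move=> a b ha hb; rewrite adde_eq_ninfty negb_or ha hb.
by move=> i _; exact: stage_ninfty.
Qed.

Lemma claimC N p xs : Fc N p (xs 0%N) (xs N) <= S N p xs.
Proof.
elim: N p xs => [|N IH] p xs.
  by rewrite /= cdelta_refl /S big_ord0.
case: p => u p; rewrite S_split /=.
have [e|ne] := eqVneq (xs N) (endp N p (xs 0%N)).
  by rewrite -e; apply: leeD => //; exact: IH.
have := IH p xs; rewrite Fc_pinfty; last by move=> e; rewrite e eqxx in ne.
rewrite leye_eq => /eqP ->.
by rewrite addye ?stage_ninfty // leey.
Qed.

Lemma extE N p x0 xs u z : xs 0%N = x0 -> xs N = endp N p x0 ->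
  S N p xs <= Fc N p x0 (endp N p x0) ->
  let xs' := fun i => if i == N.+1 then z else xs i in
  [/\ xs' 0%N = x0, xs' N.+1 = z &
    S N.+1 ((u, p) : paramN U N.+1) xs' <= Fc N.+1 ((u, p) : paramN U N.+1) x0 z].
Proof.
move=> h0 hN hS xs'; split; rewrite /xs' ?eqxx //.
rewrite S_split /= eqxx (@ltn_eqF N N.+1) // hN.
apply: leeD => //.
suff -> : S N p (fun i => if i == N.+1 then z else xs i) = S N p xs by [].
rewrite /S; apply: eq_bigr => i _.
rewrite ltn_eqF; last by apply: leqW; exact: ltn_ord.
by rewrite eqSS ltn_eqF.
Qed.

Lemma claimD N p x0 : exists xs, [/\ xs 0%N = x0, xs N = endp N p x0 &
  S N p xs <= Fc N p x0 (endp N p x0)].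
Proof.
elim: N p x0 => [|N IH] p x0.
  by exists (fun _ => x0); rewrite /= cdelta_refl /S big_ord0.
case: p => u p.
have [xs [h0 hN hS]] := IH p x0.
exists (fun i => if i == N.+1 then endp N.+1 (u, p) x0 else xs i).
exact: (@extE N p x0 xs u (endp N.+1 (u, p) x0) h0 hN hS).
Qed.
End Aux.

Theorem mainTheorem4 (R : realType) (n k m : nat)
  (ell : 'rV[R]_n -> 'rV[R]_k -> R) (g : 'rV[R]_n -> 'rV[R]_k -> 'rV[R]_m)
  (fd : 'rV[R]_n -> 'rV[R]_k -> 'rV[R]_n)
  (hell : convex_XU ell) (hg : forall j, convex_XU (fun x u => g x u ord0 j))
  (hfd : affine_XU fd)
  (N : nat) (hN : (0 < N)%N)
  (p : paramN 'rV[R]_k N) (x0 xN : 'rV[R]_n) :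
  @para_pow R _ _ (one_step ell fd g) N (p, x0) xN =
  ereal_inf [set (\sum_(i < N) stage ell fd g (xs i) (@ctrl _ 0%R N p i) (xs i.+1))%E
            | xs in [set xs : nat -> 'rV[R]_n | xs 0%N = x0 /\ xs N = xN]].
Proof.
rewrite lhs_Fc.
apply/le_anti/andP; split.
  apply: le_ereal_inf_tmp => _ [xs [h0 hN'] <-].
  by have := @claimC _ _ _ _ ell g fd N p xs; rewrite h0 hN'.
case: N hN p => [//|N] _ [u p].
have [xs [h0 hN hS]] := @claimD _ _ _ _ ell g fd N p x0.
have [a b c] := @extE _ _ _ _ ell g fd N p x0 xs u xN h0 hN hS.
apply: ge_ereal_inf; eexists; last exact: c.
by exists (fun i => if i == N.+1 then xN else xs i).
Qed.
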